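(* Let $n>2$ and $1<k<n$. In $H_B(n,k)$ the eccentricity of a vertex $v$ is $e(v)=3$ if $v\in V_1$; $e(v)=2$ if $v\in V_2$ is an $n$-vertex; and $e(v)=4$ if $v\in V_2$ is an $r$-vertex with $1\le r<n$.
   Context: Fix integers $n\ge 2$ and $1\le k<n$ and positive real numbers $x_1<x_2<\dots<x_n$. Let $\mathscr{B}_n=\{\pm x_1,\pm x_2,\dots,\pm x_{n-1},x_n\}$ (so $-x_n\notin\mathscr{B}_n$). Let $\phi(\mathscr{B}_n)$ be the family of all nonempty subsets $S\subseteq\mathscr{B}_n$ whose elements have pairwise distinct absolute values and whose element of largest absolute value is positive. Let $\mathscr{B}_n^+=\{x_1,\dots,x_n\}$, let $V_1$ be the set of all $k$-element subsets of $\mathscr{B}_n^+$, and let $V_2=\phi(\mathscr{B}_n)\setminus V_1$. For $A\in\phi(\mathscr{B}_n)$ put $A^\dagger=\{|a|:a\in A\}$. The bipartite Kneser B type-$k$ graph $H_B(n,k)$ is the simple graph with vertex set $V_1\cup V_2$ in which $X\in V_1$ and $Y\in V_2$ are adjacent if and only if $X\subseteq Y^\dagger$ or $Y^\dagger\subseteq X$, and there are no other edges. An $r$-vertex is a vertex having exactly $r$ elements. The eccentricity $e(v)$ is the maximum distance from $v$ to any vertex. *)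

(* Defs.v *)
From mathcomp Require Import all_boot.
Set Implicit Arguments. Unset Strict Implicit. Unset Printing Implicit Defensive.

(* Signed elements of B_n: (i, true) encodes +x_(i+1), (i, false) encodes -x_(i+1),
   for i : 'I_n.  Since 0 < x_1 < ... < x_n, |(i,s)| is determined by i and the
   order of absolute values is the order of indices. *)
Definition selt (n : nat) := ('I_n * bool)%type.

(* B_n = {±x_1,...,±x_{n-1}, x_n}: excludes -x_n *)
Definition inBn (n : nat) (p : selt n) : bool := p.2 || (val p.1 != n.-1).

(* phi(B_n): nonempty subsets of B_n, pairwise distinct absolute values,
   element of largest absolute value positive *)
Definition inPhi (n : nat) (S : {set selt n}) : bool :=
  [&& S \subset [set p | inBn p], S != set0,
      [forall p in S, forall q in S, (p.1 == q.1) ==> (p == q)] &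
      [forall p in S, [forall q in S, val q.1 <= val p.1] ==> p.2]].

Definition inV1 (n k : nat) (S : {set selt n}) : bool :=
  (S \subset [set p | p.2]) && (#|S| == k).

Definition inV2 (n k : nat) (S : {set selt n}) : bool :=
  inPhi S && ~~ inV1 k S.

Definition dagger (n : nat) (S : {set selt n}) : {set selt n} :=
  [set (p.1, true) | p in S].

Definition isVertex (n k : nat) (S : {set selt n}) : bool := inV1 k S || inV2 k S.

Definition HBedge0 (n k : nat) (X Y : {set selt n}) : bool :=
  [&& inV1 k X, inV2 k Y & (X \subset dagger Y) || (dagger Y \subset X)].

Definition HBadj (n k : nat) : rel {set selt n} :=
  fun X Y => HBedge0 k X Y || HBedge0 k Y X.

Definition walk (n k : nat) (u v : {set selt n}) (m : nat) : Prop :=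
  exists s : seq {set selt n}, [/\ size s = m, path (@HBadj n k) u s & last u s = v].

Definition dist (n k : nat) (u v : {set selt n}) (d : nat) : Prop :=
  walk k u v d /\ forall m, walk k u v m -> d <= m.

Definition ecc (n k : nat) (v : {set selt n}) (e : nat) : Prop :=
  (forall w, isVertex k w -> exists2 d, d <= e & walk k v w d) /\
  (exists w, isVertex k w /\ dist k v w e).

(* Main.v *)
Require Import Defs.
From mathcomp Require Import all_boot zify.
Set Implicit Arguments. Unset Strict Implicit.

Definition pos n : {set selt n} := [set p | p.2].

Lemma card_pos n : #|pos n| = n.
Proof.
have -> : pos n = [set (i, true) | i : 'I_n].
  apply/setP => -[i b]; rewrite !inE; apply/idP/imsetP => [/= -> | [j _ [_ ->]]] //.
  by exists i.
by rewrite card_imset ?card_ord // => i j [].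
Qed.

Lemma dagger_pos n (S : {set selt n}) : dagger S \subset pos n.
Proof. by apply/subsetP => x /imsetP [p _ ->]; rewrite inE. Qed.

Lemma dagger_id n (S : {set selt n}) : S \subset pos n -> dagger S = S.
Proof.
move=> /subsetP H; apply/setP => x; apply/imsetP/idP => [[p pS ->]|xS].
  by have := H _ pS; rewrite inE; case: p pS => i [].
by exists x => //; have := H _ xS; rewrite inE; case: x xS => i [].
Qed.

Lemma card_dagger n (S : {set selt n}) : inPhi S -> #|dagger S| = #|S|.
Proof.
case/and4P => _ _ /forallP H _; rewrite card_in_imset // => p q pS qS [e].
have := H p; rewrite pS /= => /forallP/(_ q); rewrite qS e eqxx /=.
by move/eqP.
Qed.

Lemma phi_pos n (S : {set selt n}) : S \subset pos n -> S != set0 -> inPhi S.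
Proof.
move=> /subsetP H ne; apply/and4P; split => //.
- by apply/subsetP => x /H; rewrite !inE /inBn => ->.
- apply/forallP => p; apply/implyP => pS; apply/forallP => q; apply/implyP => qS.
  apply/implyP => /eqP e; move: (H _ pS) (H _ qS) e; rewrite !inE.
  by case: p {pS} => i [] //; case: q {qS} => j [] //= _ _ ->.
- by apply/forallP => p; apply/implyP => pS; have := H _ pS; rewrite inE => ->; rewrite implybT.
Qed.

Lemma grow n (A B : {set selt n}) d : A \subset B -> #|A| + d <= #|B| ->
  exists X : {set selt n}, [/\ A \subset X, X \subset B & #|X| = #|A| + d].
Proof.
move=> AB; elim: d => [|d IH] Hd.
  by exists A; rewrite addn0.
have [X [AX XB cX]] : exists X : {set selt n}, [/\ A \subset X, X \subset B & #|X| = #|A| + d] by apply: IH; apply: leq_trans Hd; rewrite leq_add2l.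
have : 0 < #|B :\: X| by rewrite cardsD (setIidPr XB) subn_gt0 cX -addnS.
case/card_gt0P => x; rewrite inE => /andP [xX xB].
exists (x |: X); split.
- exact: subset_trans AX (subsetUr _ _).
- by rewrite subUset sub1set xB.
- by rewrite cardsU1 xX cX addnS.
Qed.

Lemma nbr n k (D : {set selt n}) : D \subset pos n -> k <= n ->
  exists X : {set selt n}, [/\ X \subset pos n, #|X| = k & (X \subset D) || (D \subset X)].
Proof.
move=> Dp kn; case: (leqP k #|D|) => h.
  have [X [_ XD cX]] := @grow n set0 D k (sub0set _) ltac:(by rewrite cards0).
  exists X; rewrite cards0 in cX; split => //; last by rewrite XD.
  exact: subset_trans XD Dp.
have [X [DX Xp cX]] := @grow n D (pos n) (k - #|D|) Dp
  ltac:(by rewrite card_pos subnKC // ltnW).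
exists X; split => //; last by rewrite DX orbT.
by rewrite cX subnKC // ltnW.
Qed.

Lemma posE n (x : selt n) : x \in pos n -> x = (x.1, true).
Proof. by case: x => i b; rewrite inE /= => ->. Qed.

Lemma signW n (B : {set selt n}) (m o : selt n) : B \subset pos n -> m \in B -> o \in B ->
  val m.1 < val o.1 ->
  exists W : {set selt n}, [/\ inPhi W, ~~ (W \subset pos n) & dagger W = B].
Proof.
move=> /subsetP HB mB oB mo.
have mP := posE (HB _ mB).
exists ((m.1, false) |: (B :\ m)); split.
- apply/and4P; split.
  + apply/subsetP => x; rewrite !inE => /orP [/eqP -> | /andP [_ xB]].
      rewrite /inBn /=; apply/eqP => e; move: mo (ltn_ord o.1) e => /=; lia.
    by rewrite /inBn (posE (HB _ xB)).
  + by apply/set0Pn; exists (m.1, false); rewrite !inE eqxx.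
  + apply/forallP => p; apply/implyP => pW; apply/forallP => q; apply/implyP => qW.
    apply/implyP => /eqP; move: pW qW; rewrite !inE.
    case/orP => [/eqP ->|/andP [pm pB]]; case/orP => [/eqP ->|/andP [qm qB]] //= e.
    * by move/negP: qm; case; rewrite (posE (HB _ qB)) -e -mP.
    * by move/negP: pm; case; rewrite (posE (HB _ pB)) e -mP.
    * by rewrite (posE (HB _ pB)) (posE (HB _ qB)) e.
  + apply/forallP => p; apply/implyP; rewrite !inE => /orP [/eqP ->|/andP [_ pB]].
      rewrite /= implybF; apply/negP => /forallP /(_ o); rewrite !inE oB andbT /=.
      have -> : (o != m) by apply/eqP => e; move: mo; rewrite e ltnn.
      by rewrite orbT /= leqNgt mo.
    by rewrite (posE (HB _ pB)) implybT.
- apply/negP => /subsetP /(_ (m.1, false)); rewrite !inE eqxx => /(_ isT).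
  by [].
- rewrite /dagger imsetU1 /= -mP -/(dagger _) dagger_id ?setD1K //.
  by apply/subsetP => x; rewrite inE => /andP [_ /HB].
Qed.

Lemma adj_V1 n k (x y : {set selt n}) : HBadj k x y -> inV1 k y = ~~ inV1 k x.
Proof.
case/orP => /and3P [h1 /andP [_ h2] _].
  by rewrite h1 (negPf h2).
by rewrite h1 (negPf h2).
Qed.

Lemma parity n k (u : {set selt n}) s : path (HBadj k) u s ->
  inV1 k (last u s) = inV1 k u (+) odd (size s).
Proof.
elim: s u => [|a s IH] u /=; first by rewrite addbF.
case/andP => h p; rewrite IH // (adj_V1 h).
by case: (inV1 k u); case: (odd (size s)).
Qed.

Lemma walk_par n k (u v : {set selt n}) m : walk k u v m -> inV1 k v = inV1 k u (+) odd m.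
Proof. by case=> s [<- p <-]; apply: parity. Qed.

Lemma walk0 n k (u v : {set selt n}) : walk k u v 0 -> u = v.
Proof. by case=> [[|a s]] [] //. Qed.

Lemma walk1 n k (u v : {set selt n}) : walk k u v 1 -> HBadj k u v.
Proof. by case=> [[|a [|b s]]] [] //= _ /andP [h _] <-. Qed.

Lemma walk2 n k (u v : {set selt n}) : walk k u v 2 ->
  exists a, HBadj k u a /\ HBadj k a v.
Proof. by case=> [[|a [|b [|c s]]]] [] //= _ /and3P [h1 h2 _] <-; exists a. Qed.

Lemma adjC n k (a Y : {set selt n}) : inV1 k a -> HBadj k a Y || HBadj k Y a ->
  (a \subset dagger Y) || (dagger Y \subset a).
Proof.
move=> ha; rewrite /HBadj /HBedge0 ha /= /inV2 ha !andbF !orbF.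
by rewrite orbb => /andP [_ ->].
Qed.

Lemma mkadj n k (X Y : {set selt n}) : inV1 k X -> inV2 k Y ->
  (X \subset dagger Y) || (dagger Y \subset X) -> HBadj k X Y /\ HBadj k Y X.
Proof.
by move=> h1 h2 h3; rewrite /HBadj /HBedge0 h1 h2 h3 /= orbT.
Qed.

Lemma nbrV n k (Z : {set selt n}) : k <= n -> inV2 k Z ->
  exists X, [/\ inV1 k X, HBadj k X Z & HBadj k Z X].
Proof.
move=> kn hZ; have [X [Xp cX H]] := @nbr _ k _ (dagger_pos Z) kn.
have hX : inV1 k X by rewrite /inV1 Xp cX eqxx.
by have [] := mkadj hX hZ H; exists X.
Qed.

Lemma posV2 n k : 0 < n -> k != n -> inV2 k (pos n).
Proof.
move=> n0 kn; rewrite /inV2 phi_pos // -?card_gt0 ?card_pos //.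
by rewrite /inV1 card_pos eq_sym (negPf kn) andbF.
Qed.

Lemma V1pos n k (X : {set selt n}) : inV1 k X -> X \subset pos n.
Proof. by case/andP. Qed.

Lemma singleV2 n k (p : selt n) : p \in pos n -> 1 < k -> inV2 k [set p].
Proof.
move=> pp k1; rewrite /inV2 phi_pos ?sub1set //; last by apply/set0Pn; exists p; rewrite inE.
by rewrite /inV1 cards1; apply/negP => /andP [_ /eqP e]; move: k1; rewrite -e.
Qed.

Lemma compW n k (v : {set selt n}) : 1 < k -> inV2 k v -> #|v| < n ->
  exists W, inV2 k W /\ dagger W = pos n :\: dagger v.
Proof.
move=> k1 hv cn; set B := pos n :\: dagger v.
have Bp : B \subset pos n by apply: subsetDl.
have cB : #|B| = n - #|v|.
  by rewrite cardsD (setIidPr (dagger_pos v)) card_pos card_dagger //; case/andP: hv.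
case: (eqVneq #|B| k) => e.
  have : 0 < #|B| by lia.
  case/card_gt0P => p pB.
  have : 0 < #|B :\ p| by move: (cardsD1 p B); rewrite pB; lia.
  case/card_gt0P => q; rewrite in_setD1 => /andP [qp qB].
  have HB := subsetP Bp.
  have ne : val p.1 != val q.1.
    apply/eqP => e0; have e1 : p.1 = q.1 by apply: ord_inj. move/eqP: qp => qp; apply: qp.
    by rewrite (posE (HB _ pB)) (posE (HB _ qB)) e1.
  have [W [h1 h2 h3]] : exists W : {set selt n}, [/\ inPhi W, ~~ (W \subset pos n) & dagger W = B].
    case: (ltngtP (val p.1) (val q.1)) => h; first exact: signW Bp pB qB h.
      exact: signW Bp qB pB h.
    by rewrite h eqxx in ne.
  by exists W; split => //; rewrite /inV2 h1 /inV1 (negPf h2).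
exists B; split; last by rewrite dagger_id.
rewrite /inV2 phi_pos // ?/inV1 ?e ?andbF //; last by rewrite -card_gt0; lia.
by rewrite (negPf e) andbF.
Qed.

Theorem mainTheorem12 (n k : nat) :
  2 < n -> 1 < k < n ->
  forall v : {set selt n},
    (inV1 k v -> ecc k v 3) /\
    (inV2 k v -> #|v| = n -> ecc k v 2) /\
    (inV2 k v -> 1 <= #|v| < n -> ecc k v 4).
Proof.
move=> n2 /andP [k1 kn] v.
have kn' : k <= n := ltnW kn.
have n0 : 0 < n by lia.
have kneq : k != n by rewrite ltn_eqF.
have hP : inV2 k (pos n) := posV2 n0 kneq.
have Xpos : forall X, inV1 k X -> HBadj k X (pos n) /\ HBadj k (pos n) X.
  by move=> X hX; have Xp := V1pos hX; apply: mkadj hX hP _; rewrite dagger_id // Xp.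
have V2n1 : forall Z : {set selt n}, inV2 k Z -> inV1 k Z = false.
  by move=> Z; rewrite /inV2 => /andP [_ /negPf].
split; [|split].
-
  move=> hv; split.
    move=> w /orP [hw|hw].
      exists 2 => //; exists [:: pos n; w]; split => //=.
      by rewrite (proj1 (Xpos _ hv)) (proj2 (Xpos _ hw)).
    have [X [hX h1 h2]] := nbrV kn' hw.
    exists 3 => //; exists [:: pos n; X; w]; split => //=.
    by rewrite (proj1 (Xpos _ hv)) (proj2 (Xpos _ hX)) h1.
  have : 0 < #|pos n :\: v|.
    rewrite cardsD (setIidPr (V1pos hv)) card_pos; move/andP: hv => [_ /eqP ->].
    by rewrite subn_gt0.
  case/card_gt0P => p; rewrite inE => /andP [pv pp].
  have hZ := singleV2 pp k1.
  exists [set p]; split; first by rewrite /isVertex hZ orbT.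
  split.
    have [X [hX h1 h2]] := nbrV kn' hZ.
    exists [:: pos n; X; [set p]]; split => //=.
    by rewrite (proj1 (Xpos _ hv)) (proj2 (Xpos _ hX)) h1.
  move=> m hm; have := walk_par hm; rewrite V2n1 // hv.
  case: m hm => [|[|[|m]]] //= hm _.
  have := @adjC _ _ _ _ hv (introT orP (or_introl (walk1 hm))).
  rewrite dagger_id ?sub1set // => /orP [H|H].
    have := subset_leq_card H; rewrite cards1; move/andP: hv => [_ /eqP ->]; lia.
  by rewrite H in pv.
-
  move=> hv cv.
  have dv : dagger v = pos n.
    apply/eqP; rewrite eqEcard dagger_pos card_pos card_dagger ?cv //.
    by rewrite leqnn.
  by case/andP: hv.
  split.
    move=> w /orP [hw|hw].
      exists 1 => //; exists [:: w]; split => //=; rewrite andbT.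
      exact: (proj2 (mkadj hw hv ltac:(by rewrite dv (V1pos hw)))).
    have [X [hX h1 h2]] := nbrV kn' hw.
    exists 2 => //; exists [:: X; w]; split => //=; rewrite h1 !andbT.
    exact: (proj2 (mkadj hX hv ltac:(by rewrite dv (V1pos hX)))).
  have : 0 < #|pos n| by rewrite card_pos.
  case/card_gt0P => p pp.
  have hZ := singleV2 pp k1.
  exists [set p]; split; first by rewrite /isVertex hZ orbT.
  split.
    have [X [hX h1 h2]] := nbrV kn' hZ.
    exists [:: X; [set p]]; split => //=; rewrite h1 !andbT.
    exact: (proj2 (mkadj hX hv ltac:(by rewrite dv (V1pos hX)))).
  move=> m hm; have := walk_par hm; rewrite !V2n1 //.
  case: m hm => [|[|m]] //= hm _.
  by move: cv; rewrite (walk0 hm) cards1; lia.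
-
  move=> hv /andP [c1 cn].
  have [W [hW dW]] := compW k1 hv cn.
  have [X [hX h1 h2]] := nbrV kn' hv.
  split.
    move=> w /orP [hw|hw].
      exists 3 => //; exists [:: X; pos n; w]; split => //=.
      by rewrite h2 (proj1 (Xpos _ hX)) (proj2 (Xpos _ hw)).
    have [Y [hY g1 g2]] := nbrV kn' hw.
    exists 4 => //; exists [:: X; pos n; Y; w]; split => //=.
    by rewrite h2 (proj1 (Xpos _ hX)) (proj2 (Xpos _ hY)) g1.
  exists W; split; first by rewrite /isVertex hW orbT.
  split.
    have [Y [hY g1 g2]] := nbrV kn' hW.
    exists [:: X; pos n; Y; W]; split => //=.
    by rewrite h2 (proj1 (Xpos _ hX)) (proj2 (Xpos _ hY)) g1.
  have cA : 0 < #|dagger v| by rewrite card_dagger //; case/andP: hv.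
  move=> m hm; have := walk_par hm; rewrite !V2n1 //.
  case: m hm => [|[|[|[|m]]]] //= hm _.
    case/card_gt0P: cA => x xA.
    have e := walk0 hm; have : x \in dagger W by rewrite -e.
    by rewrite dW inE xA.
  have [a [a1 a2]] := walk2 hm.
  have ha : inV1 k a by rewrite (adj_V1 a1) V2n1.
  have := @adjC _ _ _ _ ha (introT orP (or_intror a1)).
  have := @adjC _ _ _ _ ha (introT orP (or_introl a2)).
  rewrite dW.
  have ap := V1pos ha.
  have : 0 < #|a| by move/andP: ha => [_ /eqP ->]; lia.
  case/card_gt0P => y ya.
  case/card_gt0P: cA => x xA.
  have : 0 < #|pos n :\: dagger v|.
    rewrite -dW card_dagger; last by case/andP: hW.
    by case/andP: hW => /and4P [_ ne _ _] _; rewrite card_gt0.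
  case/card_gt0P => z zB.
  move=> /orP [/subsetP H2|/subsetP H2] /orP [/subsetP H1|/subsetP H1].
  + by move: (H1 _ ya) (H2 _ ya); rewrite inE => ->.
  + by move: (H2 _ (H1 _ xA)); rewrite inE xA.
  + by move: (H1 _ (H2 _ zB)) (zB); rewrite inE => ->.
  + have : pos n \subset a.
      apply/subsetP => t tp; case: (boolP (t \in dagger v)) => tA; first exact: H1.
      by apply: H2; rewrite inE tA tp.
    move/subset_leq_card; rewrite card_pos; move/andP: ha => [_ /eqP ->]; lia.
Qed.
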